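(* Let $r\ge2$. A length function $\ell=(\ell^1,\dots,\ell^r)\in\mathbb R_{>0}^r$ on the rose $\mathcal R_r$ has $\mathfrak h_{\mathcal R_r}(\ell)=1$ if and only if $$\overline F_r(\ell):=\sum_{S\subseteq[r]}(1-2|S|)\exp(-\ell^S)=0,$$ where $\ell^S=\sum_{k\in S}\ell^k$. That is, $\mathcal M^1(\mathcal R_r)=\{\ell\in\mathbb R^r_{>0}:\overline F_r(\ell)=0\}$.
   Context: $\mathcal R_r$ is the rose with one vertex and $r$ loop edges identified with $[r]=\{1,\dots,r\}$; a length function assigns $\ell^i>0$ to edge $i$. The entropy is $\mathfrak h_{\mathcal R_r}(\ell)=\lim_{t\to\infty}\frac1t\log\#\{\gamma:\ell(\gamma)\le t\}$, where $\gamma$ ranges over based circuits: edge paths $(e_1,\dots,e_n)$ in the oriented edges (each petal with two orientations $e,\bar e$) with $e_{k+1}\ne\bar e_k$ and $e_n\ne\bar e_1$, and $\ell(\gamma)$ is the sum of the lengths of the edges traversed. $\mathcal M^1(\mathcal R_r)=\{\ell:\mathfrak h_{\mathcal R_r}(\ell)=1\}$. *)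

(* Defs.v *)
From HB Require Import structures.
From mathcomp Require Import all_boot all_order all_algebra.
From mathcomp Require Import all_classical all_reals all_analysis.
Set Implicit Arguments. Unset Strict Implicit. Unset Printing Implicit Defensive.
Import Order.TTheory GRing.Theory Num.Theory.
Local Open Scope classical_set_scope.
Local Open Scope ring_scope.

Section Rose.
Variables (R : realType) (r : nat).

(* oriented edges of the rose R_r: petal i with orientation b; (i,~~b) is the reverse *)
Definition oedge := ('I_r * bool)%type.
Definition einv (e : oedge) : oedge := (e.1, ~~ e.2).

(* based circuit: e_{k+1} != inv e_k for all k, and e_1 != inv e_n
   (the cyclic pair (e_n,e_1) is included by [cycle]) *)
Definition no_backtrack (e f : oedge) : bool := f != einv e.
Definition is_circuit (s : seq oedge) : bool := cycle no_backtrack s.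

Variable ell : 'I_r -> R.

Definition plen (s : seq oedge) : R := \sum_(e <- s) ell e.1.

Definition minlen : R := \big[Num.min/1]_(i < r) ell i.

(* A circuit with n+1 edges has length >= (n+1)*minlen, so only
   n <= truncn (t / minlen) contribute; the sum therefore counts all of them. *)
Definition circ_count (t : R) : nat :=
  \sum_(n < (Num.truncn (t / minlen)).+1)
     #|[set c : n.+1.-tuple oedge | is_circuit c && (plen c <= t)%R]|.

Definition entropy_is (h : R) : Prop :=
  (fun t : R => ln ((circ_count t)%:R) / t) @ +oo%R --> (h : R^o).

End Rose.

Definition Fbar (R : realType) (r : nat) (ell : 'I_r -> R) : R :=
  \sum_(S : {set 'I_r}) ((1 - 2 * (#|S|)%:R)%R) * expR (- \sum_(k in S) ell k).

(* Main.v *)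
Require Import Defs.
From HB Require Import structures.
From mathcomp Require Import all_boot all_order all_algebra.
From mathcomp Require Import all_classical all_reals all_analysis.
From mathcomp Require Import ring lra.
Import Order.TTheory GRing.Theory Num.Theory.
Local Open Scope ring_scope.
Set Implicit Arguments. Unset Strict Implicit. Unset Printing Implicit Defensive.

Lemma card_cons (T : finType) k (P : pred (k.+1.-tuple T)) :
  #|[set c | P c]| = (\sum_x #|[set s : k.-tuple T | P [tuple of x :: s]]|)%N.
Proof.
rewrite -sum1dep_card.
under [RHS]eq_bigr => x _ do rewrite -sum1dep_card.
rewrite pair_big_dep.
rewrite (reindex (fun p : T * k.-tuple T => [tuple of p.1 :: p.2])) /=.
  by apply: eq_bigl => -[x s].
exists (fun c : k.+1.-tuple T => (thead c, [tuple of behead c])) => [[x s]|c] _ /=.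
  by congr pair; apply: val_inj.
by rewrite [RHS]tuple_eta.
Qed.

Section Comb.
Variables (R : realType) (r : nat) (ell : 'I_r -> R).
Local Notation oe := (oedge r).
Local Notation nb := (@no_backtrack r).
Local Notation plen := (plen ell).

Fixpoint Cn (k : nat) (e : oe) (t : R) : nat :=
  if k is k'.+1 then (\sum_(f | f != einv e) Cn k' f (t - ell f.1))%N
  else (0 <= t)%R : nat.

Lemma plen_cons x s : plen (x :: s) = ell x.1 + plen s.
Proof. by rewrite /Defs.plen big_cons. Qed.

Lemma card_path k e t :
  #|[set s : k.-tuple oe | path nb e s && (plen s <= t)]| = Cn k e t.
Proof.
elim: k e t => [|k IH] e t /=.
  case: (boolP (0 <= t)) => ht.
    transitivity 1%N => //; rewrite -(cards1 ([tuple] : 0.-tuple oe)); apply: eq_card => s.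
    by rewrite tuple0 !inE /Defs.plen big_nil ht; apply/esym/eqP.
  apply: eq_card0 => s.
  by rewrite tuple0 !inE /Defs.plen big_nil (negbTE ht).
rewrite card_cons [RHS]big_mkcond /=; apply: eq_bigr => x _.
rewrite -IH; case: ifPn => hx.
  apply: eq_card => s; rewrite !inE /= plen_cons.
  by rewrite /no_backtrack hx /= lerBrDl.
apply: eq_card0 => s.
by rewrite !inE /= /no_backtrack (negbTE hx).
Qed.

Definition X k t := #|[set c : k.+1.-tuple oe | is_circuit c && (plen c <= t)%R]|.

Lemma X_le k t : (X k t <= \sum_(e : oe) Cn k e (t - ell e.1))%N.
Proof.
rewrite /X card_cons; apply: leq_sum => e _; rewrite -card_path.
apply: subset_leq_card; apply/fintype.subsetP => s; rewrite !inE /is_circuit /=.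
rewrite rcons_path plen_cons lerBrDl => /andP[/andP[-> _] ->].
by [].
Qed.
End Comb.

Section Comb2.
Variables (R : realType) (r : nat) (ell : 'I_r -> R).
Hypothesis hpos : forall i, 0 < ell i.
Variables (j0 j1 : 'I_r).
Hypothesis hj : j0 != j1.
Local Notation oe := (oedge r).
Local Notation nb := (@no_backtrack r).
Local Notation plen := (plen ell).

Definition L := \sum_i ell i.

Lemma ell_le_L i : ell i <= L.
Proof.
rewrite /L (bigD1 i) //= lerDl sumr_ge0 // => j _; exact: ltW.
Qed.

Lemma L_gt0 : 0 < L.
Proof. exact: lt_le_trans (hpos j0) (ell_le_L j0). Qed.

Definition ych (e0 x : oe) : oe :=
  if x != einv e0 then e0 else ((if e0.1 == j0 then j1 else j0), true).

Lemma einvK (x : oe) : einv (einv x) = x.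
Proof. by case: x => i b; rewrite /einv /= negbK. Qed.

Lemma einv_neq (x : oe) : x != einv x.
Proof. by case: x => i b; rewrite /einv xpair_eqE /= eqxx /=; case: b. Qed.

Lemma ych_ok e0 x : (e0 != einv (ych e0 x)) && (ych e0 x != einv x).
Proof.
rewrite /ych; case: ifPn => hx.
  rewrite einv_neq /=; apply: contraNneq hx => ->; by rewrite einvK.
move/negPn/eqP: hx => ->; rewrite einvK.
have hne : (if e0.1 == j0 then j1 else j0) != e0.1.
  by case: ifPn => [/eqP ->|h]; rewrite eq_sym.
rewrite /einv /=; case: e0 hne => i b /= hne.
by rewrite !xpair_eqE (negbTE hne) eq_sym (negbTE hne).
Qed.


Lemma X_ge k e0 t : (Cn ell k e0 (t - ell e0.1) <= X ell k.+1 (t + L)%R)%N.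
Proof.
rewrite -card_path /X.
pose g := fun s : k.-tuple oe => [tuple of ych e0 (last e0 s) :: e0 :: s] : k.+2.-tuple oe.
have g_inj : injective g.
  move=> s1 s2 /(congr1 (fun c : k.+2.-tuple oe => behead (behead (val c)))) /= h.
  exact: val_inj.
rewrite -(card_imset _ g_inj); apply: subset_leq_card; apply/fintype.subsetP => c.
case/imsetP => s; rewrite inE => /andP[hp hl] ->; rewrite inE /g /is_circuit /=.
have /andP[h1 h2] := ych_ok e0 (last e0 s).
rewrite /no_backtrack h1 rcons_path hp h2 /=.
rewrite !plen_cons [t + L]addrC; apply: lerD; first exact: ell_le_L.
by rewrite -lerBrDl.
Qed.
End Comb2.

Section Count.
Variables (R : realType) (r : nat) (ell : 'I_r -> R).
Hypothesis hpos : forall i, 0 < ell i.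
Local Notation oe := (oedge r).
Local Notation plen := (plen ell).
Local Notation m := (minlen ell).

Lemma m_pos : 0 < m.
Proof. by rewrite /minlen; elim/big_rec: _ => // i x _ hx; rewrite lt_min hx hpos. Qed.

Lemma m_le i : m <= ell i.
Proof. exact: bigmin_le. Qed.

Lemma plen_ge (s : seq oe) : (size s)%:R * m <= plen s.
Proof.
elim: s => [|x s IH]; first by rewrite /Defs.plen big_nil mul0r.
by rewrite plen_cons /= -addn1 natrD mulrDl mul1r addrC lerD // m_le.
Qed.

Lemma X0 k t : t < k.+1%:R * m -> X ell k t = 0%N.
Proof.
move=> ht; apply: eq_card0 => c; rewrite !inE.
apply/negbTE; rewrite negb_and; apply/orP; right; rewrite -ltNge.
by apply: lt_le_trans ht _; have := plen_ge c; rewrite size_tuple.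
Qed.

Lemma circ_countE t :
  circ_count ell t = (\sum_(n < (Num.truncn (t / m)).+1) X ell n t)%N.
Proof.
rewrite /circ_count /X; apply: eq_bigr => n _; apply: eq_card => c.
Set Printing Coercions.
rewrite [RHS]inE; exact: asboolb.
Qed.

Lemma sum_X_le K t : (\sum_(k < K) X ell k t <= circ_count ell t)%N.
Proof.
rewrite circ_countE; set M := (Num.truncn (t / m)).+1.
case: (leqP K M) => hK.
  by rewrite -(subnKC hK) big_split_ord /= leq_addr.
rewrite -(subnKC (ltnW hK)) big_split_ord /= [X in (_ + X)%N]big1 ?addn0 // => i _.
apply: X0; have := truncnS_gt (t / m); rewrite ltr_pdivrMr ?m_pos // => h.
apply: lt_le_trans h _; rewrite ler_wpM2r ?ltW ?m_pos //.
by rewrite ltr_nat /M ltnS leq_addr.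
Qed.
End Count.

Section Exp.
Variables (R : realType) (r : nat) (ell : 'I_r -> R).
Hypothesis hpos : forall i, 0 < ell i.
Variable a : R.
Hypothesis ha : 0 <= a.
Local Notation oe := (oedge r).

Definition w (e : oe) := expR (- (a * ell e.1)).
Definition v (e : oe) := (1 + w e)^-1.
Definition phi := \sum_(e : oe) w e * v e.

Lemma w_gt0 e : 0 < w e. Proof. exact: expR_gt0. Qed.
Lemma w_le1 e : w e <= 1.
Proof. by rewrite /w expR_le1 oppr_le0 mulr_ge0 // ltW. Qed.
Lemma v_gt0 e : 0 < v e.
Proof. by rewrite /v invr_gt0 addr_gt0 // w_gt0. Qed.
Lemma v_le1 e : v e <= 1.
Proof. by rewrite /v invf_le1 ?lerDl ?ltW ?w_gt0 // addr_gt0 // w_gt0. Qed.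
Lemma v_ge e : 1 <= 2 * v e.
Proof.
rewrite /v -(@ler_pM2r _ (1 + w e)) ?addr_gt0 ?w_gt0 // mul1r -mulrA mulVf.
  by rewrite mulr1 -[2]/(1 + 1) lerD2l w_le1.
by rewrite gt_eqF // addr_gt0 // w_gt0.
Qed.
Lemma wv e : w e * v e = 1 - v e.
Proof.
rewrite /v; have h : 1 + w e != 0 by rewrite gt_eqF // addr_gt0 // w_gt0.
by field.
Qed.
Lemma w_einv e : w (einv e) = w e. Proof. by []. Qed.
Lemma v_einv e : v (einv e) = v e. Proof. by []. Qed.

Lemma sum_nb e : \sum_(f | f != einv e) w f * v f = v e + (phi - 1).
Proof.
rewrite /phi [X in _ = _ + (X - 1)](bigD1 (einv e)) //= w_einv v_einv wv.
ring.
Qed.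

Lemma expR_aB t e : expR (a * (t - ell e.1)) = expR (a * t) * w e.
Proof. by rewrite /w -expRD mulrBr. Qed.

Lemma C_ub : phi <= 1 -> forall k e t, (Cn ell k e t)%:R <= 2 * v e * expR (a * t).
Proof.
move=> hphi; elim=> [|k IH] e t /=.
  case: (boolP (0 <= t)) => ht /=.
    rewrite -[1%:R]mulr1; apply: ler_pM => //; first exact: v_ge.
    by rewrite -expR0 ler_expR mulr_ge0.
  by rewrite mulr_ge0 // ?expR_ge0 // mulr_ge0 // ltW // v_gt0.
rewrite natr_sum.
apply: (le_trans (y := \sum_(f | f != einv e) 2 * expR (a * t) * (w f * v f))).
  apply: ler_sum => f _; apply: le_trans (IH f _) _.
  by rewrite expR_aB le_eqVlt; apply/orP; left; apply/eqP; ring.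
rewrite -mulr_sumr sum_nb.
have -> : 2 * v e * expR (a * t) = 2 * expR (a * t) * v e by ring.
rewrite ler_wpM2l ?mulr_ge0 ?expR_ge0 //.
by rewrite gerDl subr_le0.
Qed.

Definition B n e t := (\sum_(k < n.+1) Cn ell k e t)%N.

Lemma B_rec n e t :
  B n.+1 e t = ((0 <= t)%R + \sum_(f | f != einv e) B n f (t - ell f.1))%N.
Proof.
rewrite /B big_ord_recl /=; congr addn.
by rewrite (exchange_big) /=.
Qed.

Lemma B_ge1 n e t : 0 <= t -> (1 <= B n e t)%N.
Proof. by move=> ht; rewrite /B big_ord_recl /= ht. Qed.

Lemma lb_small n e t : 0 <= t -> t <= L ell ->
  expR (- (a * L ell)) * v e * expR (a * t) <= (B n e t)%:R.
Proof.
move=> h0 htL.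
apply: (le_trans (y := 1)); last by rewrite ler1n B_ge1.
apply: (le_trans (y := expR (- (a * L ell)) * 1 * expR (a * L ell))).
  have hv := v_gt0 e.
  apply: ler_pM; rewrite ?expR_ge0 ?mulr_ge0 ?expR_ge0 //.
    exact: ltW hv.
    by rewrite ler_pM2l ?expR_gt0 // v_le1.
  by rewrite ler_expR ler_wpM2l.
by rewrite mulr1 -expRD addNr expR0.
Qed.

Lemma C_lb : 1 <= phi -> forall n e t, 0 <= t -> t <= n%:R * minlen ell ->
  expR (- (a * L ell)) * v e * expR (a * t) <= (B n e t)%:R.
Proof.
move=> hphi; elim=> [|n IH] e t h0 h1.
  apply: lb_small => //; apply: (le_trans h1).
  by rewrite mul0r /L sumr_ge0 // => i _; apply: ltW.
case: (leP t (L ell)) => htL; first exact: lb_small.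
rewrite B_rec natrD.
apply: (le_trans (y := (\sum_(f | f != einv e) B n f (t - ell f.1))%:R)); last by rewrite lerDr ler0n.
rewrite natr_sum.
apply: (le_trans (y := \sum_(f | f != einv e)
   expR (- (a * L ell)) * expR (a * t) * (w f * v f))).
  rewrite -mulr_sumr sum_nb.
  have -> : expR (- (a * L ell)) * v e * expR (a * t) =
    expR (- (a * L ell)) * expR (a * t) * v e by ring.
  by rewrite ler_wpM2l ?mulr_ge0 ?expR_ge0 // lerDl subr_ge0.
apply: ler_sum => f _; apply: le_trans (IH f (t - ell f.1) _ _).
- rewrite expR_aB le_eqVlt; apply/orP; left; apply/eqP; ring.
- by rewrite subr_ge0; apply: le_trans (ell_le_L hpos f.1) (ltW htL).
- rewrite lerBlDr; apply: (le_trans h1).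
  by rewrite -addn1 natrD mulrDl mul1r lerD2l m_le.
Qed.
End Exp.

Section Bounds.
Variables (R : realType) (r : nat) (ell : 'I_r -> R).
Hypothesis hpos : forall i, 0 < ell i.
Local Notation oe := (oedge r).
Local Notation m := (minlen ell).

Lemma X_ub a (ha : 0 <= a) : phi ell a <= 1 -> forall n t,
  (X ell n t)%:R <= 2 * expR (a * t).
Proof.
move=> hphi n t.
apply: (le_trans (y := (\sum_(e : oe) Cn ell n e (t - ell e.1))%:R)).
  by rewrite ler_nat X_le.
rewrite natr_sum.
apply: (le_trans (y := \sum_(e : oe) 2 * expR (a * t) * (w ell a e * v ell a e))).
  apply: ler_sum => e _; apply: le_trans (C_ub hpos ha hphi _ _ _) _.
  by rewrite expR_aB le_eqVlt; apply/orP; left; apply/eqP; ring.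
by rewrite -mulr_sumr -/(phi ell a) -[X in _ <= X]mulr1 ler_wpM2l // mulr_ge0 ?expR_ge0.
Qed.

Lemma count_ub a (ha : 0 <= a) : phi ell a <= 1 -> forall t, 0 <= t ->
  (circ_count ell t)%:R <= 2 * (t / m + 1) * expR (a * t).
Proof.
move=> hphi t ht; rewrite circ_countE natr_sum.
apply: (le_trans (y := \sum_(n < (Num.truncn (t / m)).+1) 2 * expR (a * t))).
  by apply: ler_sum => n _; apply: X_ub.
rewrite sumr_const card_ord -(mulr_natl (2 * expR (a * t))).
have -> : 2 * (t / m + 1) * expR (a * t) = (t / m + 1) * (2 * expR (a * t)) by ring.
rewrite ler_wpM2r ?mulr_ge0 ?expR_ge0 // -addn1 natrD lerD2r truncn_le.
by rewrite divr_ge0 // ltW // m_pos.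
Qed.

Lemma count_lb (j0 j1 : 'I_r) (hj : j0 != j1) a (ha : 0 <= a) : 1 <= phi ell a ->
  exists2 K, 0 < K & forall t, 2 * L ell <= t -> K * expR (a * t) <= (circ_count ell t)%:R.
Proof.
move=> hphi; set e0 : oe := (j0, true).
exists (expR (- (a * L ell)) * v ell a e0 * expR (- (a * (L ell + ell e0.1)))).
  by rewrite !mulr_gt0 ?expR_gt0 ?v_gt0.
move=> t ht; set t' := t - L ell - ell e0.1.
have ht' : 0 <= t'.
  rewrite /t' subr_ge0 lerBrDl; apply: le_trans ht.
  have := ell_le_L hpos e0.1; lra.
set n := (Num.truncn (t' / m)).+1.
have hn : t' <= n%:R * m.
  have := truncnS_gt (t' / m); rewrite ltr_pdivrMr ?m_pos // => h; exact: ltW.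
have := C_lb hpos ha hphi e0 ht' hn.
have -> : expR (a * t') = expR (a * t) * expR (- (a * (L ell + ell e0.1))).
  by rewrite -expRD /t'; congr expR; ring.
move=> h; apply: le_trans (_ : _ <= (B ell n e0 t')%:R) _.
  by apply: le_trans h; rewrite le_eqVlt; apply/orP; left; apply/eqP; ring.
rewrite ler_nat /B; apply: leq_trans (sum_X_le hpos n.+2 t).
rewrite [X in (_ <= X)%N]big_ord_recl; apply: (leq_trans _ (leq_addl _ _)).
apply: leq_sum => k _; have := X_ge hpos hj k e0 (t - L ell).
by rewrite subrK.
Qed.
End Bounds.

Section Fbar.
Variables (R : realType) (r : nat) (ell : 'I_r -> R).
Let u i := expR (- ell i).

Lemma key_i i (S : {set 'I_r}) :
  (i \in S)%:R * \prod_j (if j \in S then u j else 1) =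
  \prod_j (if j \in S then u j else (j != i)%:R).
Proof.
case: (boolP (i \in S)) => hi.
  rewrite mul1r; apply: eq_bigr => j _; case: ifPn => // hj.
  by have -> : j != i by apply: contraNneq hj => ->.
by rewrite mul0r (bigD1 i) //= (negbTE hi) eqxx mul0r.
Qed.

Lemma Fbar_eq : Fbar ell =
  (\prod_i (u i + 1)) * (1 - \sum_i 2 * (u i / (u i + 1))).
Proof.
rewrite /Fbar.
transitivity (\sum_(S : {set 'I_r}) (1 - 2 * #|S|%:R) * \prod_j (if j \in S then u j else 1)).
  apply: eq_bigr => S _; congr (_ * _).
  by rewrite -sumrN expR_sum big_mkcond.
rewrite (eq_bigr (fun S : {set 'I_r} => \prod_j (if j \in S then u j else 1) - 2 * (#|S|%:R * \prod_j (if j \in S then u j else 1)))); last first.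
  move=> S _; rewrite mulrBl mul1r mulrA //.
rewrite sumrB -mulr_sumr.
have H1 : \sum_(S : {set 'I_r}) \prod_j (if j \in S then u j else 1) = \prod_j (u j + 1).
  by rewrite bigA_distr.
have H2 : \sum_(S : {set 'I_r}) #|S|%:R * \prod_j (if j \in S then u j else 1) =
   \sum_i \prod_j (u j + (j != i)%:R).
  rewrite (eq_bigr (fun S : {set 'I_r} => \sum_i ((i \in S)%:R * \prod_j (if j \in S then u j else 1)))); last first.
    move=> S _; rewrite -sum1_card big_mkcond /= natr_sum mulr_suml.
    by apply: eq_bigr => i _; case: (i \in S).
  rewrite exchange_big /=; apply: eq_bigr => i _.
  rewrite (eq_bigr (fun S : {set 'I_r} => \prod_j (if j \in S then u j else (j != i)%:R))); last first.
    by move=> S _; rewrite key_i.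
  by rewrite bigA_distr.
rewrite H1 -mulr_sumr H2 mulrBr mulr1 mulrA [_ * 2]mulrC -mulrA mulr_sumr.
rewrite [in RHS]mulr_sumr [in RHS]mulr_sumr; congr (_ - _); apply: eq_bigr => i _.
congr (2 * _).
rewrite (bigD1 i) //= eqxx addr0 [in RHS](bigD1 i) //=.
rewrite (eq_bigr (fun j => u j + 1)); last by move=> j ->.
have hu : u i + 1 != 0 by rewrite gt_eqF // addr_gt0 // expR_gt0.
by field.
Qed.

Lemma phi1 : phi ell 1 = \sum_i 2 * (u i / (u i + 1)).
Proof.
rewrite /phi; transitivity (\sum_i \sum_(b : bool) w ell 1 (i, b) * v ell 1 (i, b)).
  by rewrite pair_bigA; apply: eq_bigr => -[i b].
apply: eq_bigr => i _; rewrite big_bool /v /w /= mul1r -/(u i).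
have hu : u i + 1 != 0 by rewrite gt_eqF // addr_gt0 // expR_gt0.
by field.
Qed.

Lemma Fbar0 : Fbar ell = 0 <-> phi ell 1 = 1.
Proof.
rewrite Fbar_eq phi1; split.
  move/eqP; rewrite mulf_eq0 => /orP[/eqP h|]; last by rewrite subr_eq0 => /eqP <-.
  have : 0 < \prod_i (u i + 1) by apply: prodr_gt0 => i _; rewrite addr_gt0 // expR_gt0.
  by rewrite h ltxx.
by move=> ->; rewrite subrr mulr0.
Qed.
End Fbar.

Section Cont.
Local Open Scope classical_set_scope.
Variables (R : realType) (r : nat) (ell : 'I_r -> R).

Lemma w_cvg e : w ell a e @[a --> (1:R^o)] --> (w ell 1 e : R^o).
Proof.
rewrite /w.
apply: (@cvg_comp _ _ _ (fun a => - (a * ell e.1)) expR _ (nbhs (- (1 * ell e.1)))).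
  by apply: cvgN; apply: cvgMr_tmp; exact: cvg_id.
exact: continuous_expR.
Qed.

Lemma v_cvg e : v ell a e @[a --> (1:R^o)] --> (v ell 1 e : R^o).
Proof.
rewrite /v; apply: cvgV; first by rewrite gt_eqF // addr_gt0 // expR_gt0.
by apply: cvgD; [exact: cvg_cst | exact: w_cvg].
Qed.

Lemma phi_cvg : phi ell a @[a --> (1:R^o)] --> (phi ell 1 : R^o).
Proof.
rewrite /phi; apply: (cvg_big (op := +%R) (x0 := 0) (P := xpredT)) => // [|e _].
  exact: add_continuous.
have H := cvgM (@w_cvg e) (@v_cvg e).
exact: H.
Qed.
End Cont.

Section Lim.
Local Open Scope classical_set_scope.
Variables (R : realType) (r : nat) (ell : 'I_r -> R).
Hypothesis hpos : forall i, 0 < ell i.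
Local Notation m := (minlen ell).
Local Notation N t := ((circ_count ell t)%:R : R).

Lemma ev (P : R -> Prop) M : (forall t, M < t -> P t) -> \forall t \near +oo%R, P t.
Proof. by move=> h; exists M; split => //; exact: num_real. Qed.

Lemma small_div (c d t : R) : 0 < d -> Num.max 0 (`|c| / d) < t -> c <= d * t.
Proof.
move=> hd; rewrite gt_max => /andP[t0 ht]; apply: le_trans (ler_norm c) _.
by rewrite mulrC -ler_pdivrMr // ltW.
Qed.

Lemma UBlim a (ha : 0 <= a) : phi ell a <= 1 -> forall eps, 0 < eps ->
  \forall t \near +oo%R, ln (N t) / t <= a + eps.
Proof.
move=> hphi eps he; set d := eps / 2.
have hd : 0 < d by rewrite divr_gt0.
set K0 := 2 * ((d * m)^-1 + 1).
have hK0 : 0 < K0 by rewrite mulr_gt0 // addr_gt0 // invr_gt0 mulr_gt0 // m_pos.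
apply: (@ev _ (Num.max 0 (`|ln K0| / d))) => t ht.
have t0 : 0 < t by move: ht; rewrite gt_max => /andP[].
have hc := small_div hd ht.
have hN := count_ub hpos ha hphi (ltW t0).
have hb : t / m + 1 <= ((d * m)^-1 + 1) * expR (d * t).
  have h1 : d * t <= expR (d * t) by have := expR_ge1Dx (d * t); lra.
  have h2 : 1 <= expR (d * t) by rewrite -expR0 ler_expR mulr_ge0 // ltW.
  have hm := m_pos hpos.
  have -> : t / m = (d * m)^-1 * (d * t).
    by field; rewrite ?gt_eqF.
  rewrite mulrDl mul1r; apply: lerD => //.
  by rewrite ler_wpM2l // invr_ge0 mulr_ge0 // ltW.
have hN2 : N t <= K0 * expR ((a + d) * t).
  apply: le_trans hN _.
  have -> : expR ((a + d) * t) = expR (a * t) * expR (d * t) by rewrite -expRD mulrDl.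
  rewrite /K0.
  have := expR_gt0 (a * t); have := expR_gt0 (d * t) => e1 e2.
  have -> : 2 * ((d * m)^-1 + 1) * (expR (a * t) * expR (d * t)) =
    2 * expR (a * t) * (((d * m)^-1 + 1) * expR (d * t)) by ring.
  have -> : 2 * (t / m + 1) * expR (a * t) = 2 * expR (a * t) * (t / m + 1) by ring.
  by rewrite ler_wpM2l.
rewrite ler_pdivrMr //.
have [hz|hz] := leP (N t) 0.
  by rewrite ln0 // mulr_ge0 ?addr_ge0 // ltW.
have hl : ln (N t) <= ln K0 + (a + d) * t.
  by rewrite -ler_expR lnK ?posrE // expRD lnK ?posrE.
rewrite /d in hc hl *; lra.
Qed.

Lemma LBlim (j0 j1 : 'I_r) (hj : j0 != j1) a (ha : 0 <= a) : 1 <= phi ell a ->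
  forall eps, 0 < eps -> \forall t \near +oo%R, a - eps <= ln (N t) / t.
Proof.
move=> hphi eps he; have [K hK HK] := count_lb hpos hj ha hphi.
apply: (@ev _ (Num.max (2 * L ell) (Num.max 0 (`|- ln K| / eps)))) => t.
rewrite gt_max => /andP[ht1 ht].
have t0 : 0 < t by move: ht; rewrite gt_max => /andP[].
have hc := small_div he ht.
have hN := HK t (ltW ht1).
have hNp : 0 < N t by apply: lt_le_trans hN; rewrite mulr_gt0 // expR_gt0.
have hl : ln K + a * t <= ln (N t).
  by rewrite -ler_expR lnK ?posrE // expRD lnK ?posrE.
rewrite ler_pdivlMr //; lra.
Qed.
End Lim.

Section Main.
Local Open Scope classical_set_scope.
Variable R : realType.

Lemma near2 (P Q : R -> Prop) : (\forall t \near +oo%R, P t) ->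
  (\forall t \near +oo%R, Q t) -> exists t, P t /\ Q t.
Proof.
move=> [M1 [_ H1]] [M2 [_ H2]]; exists (Num.max M1 M2 + 1).
have h1 : M1 <= Num.max M1 M2 by rewrite le_max lexx.
have h2 : M2 <= Num.max M1 M2 by rewrite le_max lexx orbT.
by split; [apply: H1 | apply: H2]; lra.
Qed.

Lemma near_pt (P : R -> Prop) : (\forall a \near (1 : R^o), P a) ->
  exists2 e : R, 0 < e & forall a : R, `|1 - a| < e -> P a.
Proof.
move=> /nbhs_ballP[e e0 He]; exists e => // a ha; exact: He.
Qed.


End Main.

Theorem main_aux (R : realType) (r : nat) (ell : 'I_r -> R) :
  (2 <= r)%N -> (forall i, 0 < ell i) ->
  (entropy_is ell 1 <-> Fbar ell = 0).
Proof.
move=> hr hpos.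
pose j0 : 'I_r := Ordinal (ltn_trans (ltnSn 0) hr).
pose j1 : 'I_r := Ordinal hr.
have hj : j0 != j1 by [].
rewrite Fbar0 /entropy_is; split.
  move=> H; case: (ltgtP (phi ell 1) 1) => // h.
    have [e e0 He] := near_pt (cvgr_lt _ (@phi_cvg _ _ ell) _ h).
    set e' := Num.min e 1.
    have e'0 : 0 < e' by rewrite lt_min e0 ltr01.
    have he1 : e' <= e by rewrite /e' ge_min lexx.
    have he2 : e' <= 1 by rewrite /e' ge_min lexx orbT.
    set a := 1 - e' / 2.
    have ha : 0 <= a by rewrite /a; lra.
    have hpa : phi ell a <= 1.
      apply/ltW/He; rewrite /a (_ : 1 - (1 - e' / 2) = e' / 2); last by ring.
      rewrite ger0_norm; lra.
    have ha1 : 0 < 1 - a by rewrite /a; lra.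
    have [t [ht1 ht2]] := near2 (UBlim hpos ha hpa (divr_gt0 ha1 (ltr0Sn _ 1)))
       ((cvgrPdist_le _ _).1 H _ (divr_gt0 ha1 (ltr0Sn _ 3))).
    by move: ht2; rewrite ler_norml => /andP[h3 h4]; lra.
  have [e e0 He] := near_pt (cvgr_gt _ (@phi_cvg _ _ ell) _ h).
  set e' := Num.min e 1.
  have e'0 : 0 < e' by rewrite lt_min e0 ltr01.
  have he1 : e' <= e by rewrite /e' ge_min lexx.
  have he2 : e' <= 1 by rewrite /e' ge_min lexx orbT.
  set a := 1 + e' / 2.
  have ha : 0 <= a by rewrite /a; lra.
  have hpa : 1 <= phi ell a.
    apply/ltW/He; rewrite /a (_ : 1 - (1 + e' / 2) = - (e' / 2)); last by ring.
    rewrite normrN ger0_norm; lra.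
  have ha1 : 0 < a - 1 by rewrite /a; lra.
  have [t [ht1 ht2]] := near2 (LBlim hpos hj ha hpa (divr_gt0 ha1 (ltr0Sn _ 1)))
     ((cvgrPdist_le _ _).1 H _ (divr_gt0 ha1 (ltr0Sn _ 3))).
  by move: ht2; rewrite ler_norml => /andP[h3 h4]; lra.
move=> h1; apply/cvgrPdist_le => eps he.
have hp1 : phi ell 1 <= 1 by rewrite h1.
have hp2 : 1 <= phi ell 1 by rewrite h1.
apply: filterS2 (UBlim hpos ler01 hp1 he) (LBlim hpos hj ler01 hp2 he).
move=> t h3 h4; rewrite ler_norml; apply/andP; split; lra.
Qed.


Theorem mainTheorem12 (R : realType) (r : nat) (ell : 'I_r -> R) :
  (2 <= r)%N -> (forall i, 0 < ell i) ->
  (entropy_is ell 1 <-> Fbar ell = 0).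
Proof. exact: main_aux. Qed.
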